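(* Let $c,\rho>0$ and let $\{(\mathbf z^t,\mathbf w^t,\boldsymbol\lambda^t)\}_{t\ge0}$ be generated by Algorithm SP-ADMM-JCNL. Then for all $t\ge1$, $$\mathcal L(\mathbf z^{t+1},\mathbf w^{t+1},\boldsymbol\lambda^{t+1})-\mathcal L(\mathbf z^t,\mathbf w^t,\boldsymbol\lambda^t)\le\sum_{i\in\mathcal N}\Big[-\tfrac c2\|\Delta\mathbf z_i^{t+1}\|^2_{\mathbf S_i}-\tfrac\rho2\|\Delta\mathbf w_i^{t+1}\|^2+\tfrac{3(N_{\max}+2)}{c}\|\mathbf H_i\Delta\tilde{\mathbf z}_i^{t+1}-\mathbf D_i\Delta\mathbf w_i^t\|^2+3c(2N_{\max}+1)\|\Delta\tilde{\mathbf z}_i^{t+1}-\Delta\mathbf z_i^{t+1}\|^2_{\mathbf A_i^T\mathbf A_i}+3(1+2c)(2+N_{\max})\|\Delta\tilde{\mathbf z}_i^{t+1}-\Delta\mathbf z_i^{t}\|^2_{\mathbf S_i}\Big],$$ where $N_{\max}=\max_{i}N_i$.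
   Context: $G=(\mathcal N,\mathcal E)$ is a connected undirected graph on $\mathcal N=\{1,\dots,N\}$, $\mathcal N_i=\{j:(i,j)\in\mathcal E\}$, $N_i=|\mathcal N_i|\ge1$ (neighbors listed in a fixed order). $\mathcal A\subseteq\mathcal N$ is a nonempty set of anchors with known positions $\mathbf a_k\in\mathbb R^n$. Measurements $d_{i,j}=d_{j,i}\ge0$ ($j\in\mathcal N_i$) and $r_i\ge0$. $\mathcal B^{k}$ is the product of $k$ closed Euclidean unit balls of $\mathbb R^n$; $\delta_C$ is the indicator function of $C$. Variables: $\mathbf z_i=(\mathbf x_i,\mathbf p_i^-,\mathbf p_i^+,\mathbf y_i,\mathbf q_i^-,\mathbf q_i^+)\in\mathbb R^{(4N_i+2)n}$ with $\mathbf p_i^\pm=(\mathbf p^\pm_{i,j})_{j\in\mathcal N_i}$, $\mathbf q_i^\pm=(\mathbf q^\pm_{i,j})_{j\in\mathcal N_i}$ (blocks in $\mathbb R^n$), $\mathbf z=(\mathbf z_i)_i$; $\mathbf w_i=((\mathbf v_{i,j})_{j\in\mathcal N_i},\mathbf u_i)\in\mathbb R^{(N_i+1)n}$, $\mathbf w=(\mathbf w_i)_i$; $\boldsymbol\lambda_i\in\mathbb R^{3N_in}$. Linear maps (identified with their matrices): $\mathbf H_i\mathbf z_i=((\mathbf x_i-\mathbf p^+_{i,j})_{j},\mathbf x_i-\mathbf y_i)$, $\mathbf A_i\mathbf z_i=((\mathbf x_i-\mathbf p^-_{i,j})_j,(\mathbf y_i-\mathbf q^-_{i,j})_j,(\mathbf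 y_i-\mathbf q^+_{i,j})_j)$, $\mathbf D_i=\mathrm{Diag}((d_{i,j})_{j\in\mathcal N_i},r_i)\otimes\mathbf I_n$. $G_i(\mathbf z_i,\mathbf w_i)=\frac12\|\mathbf H_i\mathbf z_i\|^2-\mathbf w_i^T\mathbf D_i\mathbf H_i\mathbf z_i$. $\mathcal X=\{\mathbf z:\mathbf x_i=\mathbf a_i\ \forall i\in\mathcal A\}$, $\mathcal Y=\{\mathbf z:\mathbf p^+_{i,j}=\mathbf p^-_{j,i},\ \mathbf q^+_{i,j}=\mathbf q^-_{j,i}\ \forall i,\ j\in\mathcal N_i\}$. $|\mathbf M|$ is the entrywise absolute value, $\|\mathbf v\|^2_{\mathbf M}=\mathbf v^T\mathbf M\mathbf v$, $\mathbf S_i=|\mathbf A_i^T\mathbf A_i|+\frac1c|\mathbf H_i^T\mathbf H_i|$, $\mathbf U_i=\mathbf H_i^T\mathbf H_i+c\mathbf A_i^T\mathbf A_i+c\mathbf S_i$ (a positive definite diagonal matrix). Augmented Lagrangian: $\mathcal L_i(\mathbf z_i,\mathbf w_i,\boldsymbol\lambda_i)=G_i(\mathbf z_i,\mathbf w_i)+\delta_{\mathcal B^{N_i+1}}(\mathbf w_i)+\langle\boldsymbol\lambda_i,\mathbf A_i\mathbf z_i\rangle+\frac c2\|\mathbf A_i\mathbf z_i\|^2$, $\mathcal L=\sum_i\mathcal L_i$. Algorithm SP-ADMM-JCNL (parameters $c,\rho>0$; arbitrary $\mathbf z^0,\mathbf w^0$, $\boldsymbol\lambda^0=\mathbf 0$):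 for $t\ge0$, $\mathbf z^{t+1}=\arg\min_{\mathbf z\in\mathcal X\cap\mathcal Y}\sum_i[\mathcal L_i(\mathbf z_i,\mathbf w_i^t,\boldsymbol\lambda_i^t)+\frac c2\|\mathbf z_i-\mathbf z_i^t\|^2_{\mathbf S_i}]$; $\mathbf w^{t+1}=\arg\min_{\mathbf w}\sum_i[\mathcal L_i(\mathbf z_i^{t+1},\mathbf w_i,\boldsymbol\lambda_i^t)+\frac\rho2\|\mathbf w_i-\mathbf w_i^t\|^2]$, i.e. $\mathbf w_i^{t+1}=\mathrm{proj}_{\mathcal B^{N_i+1}}(\mathbf w_i^t+\rho^{-1}\mathbf D_i\mathbf H_i\mathbf z_i^{t+1})$; $\boldsymbol\lambda_i^{t+1}=\boldsymbol\lambda_i^t+c\mathbf A_i\mathbf z_i^{t+1}$. Auxiliary sequence: $\tilde{\mathbf z}_i^{t+1}=\mathbf U_i^{-1}(\mathbf H_i^T\mathbf D_i\mathbf w_i^t-\mathbf A_i^T\boldsymbol\lambda_i^t+c\mathbf S_i\mathbf z_i^t)$ for $t\ge0$. Increments: $\Delta\mathbf z_i^t=\mathbf z_i^t-\mathbf z_i^{t-1}$, $\Delta\mathbf w_i^t=\mathbf w_i^t-\mathbf w_i^{t-1}$, $\Delta\tilde{\mathbf z}_i^t=\tilde{\mathbf z}_i^t-\tilde{\mathbf z}_i^{t-1}$, $\Delta\boldsymbol\lambda_i^t=\boldsymbol\lambda_i^t-\boldsymbol\lambda_i^{t-1}$. *)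

(* Defs.v *)
From HB Require Import structures.
From mathcomp Require Import all_boot all_order all_algebra.
Set Implicit Arguments. Unset Strict Implicit. Unset Printing Implicit Defensive.
Import Order.TTheory GRing.Theory Num.Theory.
Local Open Scope ring_scope.

(* ---------- generic block linear algebra ---------------------------------
   A vector of R^{|T| n} is a family T -> 'rV_n of blocks; every matrix of the
   paper has the form M (x) I_n, and is represented by its block kernel
   M : U -> T -> R (entry of M in row u, column t).  Entrywise absolute value
   commutes with (x) I_n, so |M (x) I_n| = |M| (x) I_n. *)
Section Blocks.
Variables (R : realFieldType) (n : nat).

Definition vdot (u v : 'rV[R]_n) : R := \sum_k u ord0 k * v ord0 k.
Definition vnorm2 (v : 'rV[R]_n) : R := vdot v v.

Definition kapp (T U : finType) (M : U -> T -> R) (z : T -> 'rV[R]_n)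
  : U -> 'rV[R]_n := fun u => \sum_t M u t *: z t.
Definition bdot (T : finType) (z1 z2 : T -> 'rV[R]_n) : R :=
  \sum_t vdot (z1 t) (z2 t).
Definition bnorm2 (T : finType) (z : T -> 'rV[R]_n) : R := bdot z z.
Definition bqf (T : finType) (M : T -> T -> R) (z : T -> 'rV[R]_n) : R :=
  \sum_t \sum_s M t s * vdot (z t) (z s).
Definition bsub (T : finType) (z1 z2 : T -> 'rV[R]_n) : T -> 'rV[R]_n :=
  fun t => z1 t - z2 t.
End Blocks.

Section Kernels.
Variable (R : realFieldType).
Definition ktr (T U : finType) (M : U -> T -> R) : T -> U -> R := fun t u => M u t.
Definition kmul (T U V : finType) (M : U -> T -> R) (M' : T -> V -> R)
  : U -> V -> R := fun u v => \sum_t M u t * M' t v.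
Definition kabs (T U : finType) (M : U -> T -> R) : U -> T -> R :=
  fun u t => `|M u t|.
End Kernels.

Section Network.
Variables (R : realFieldType) (N n : nat) (adj : rel 'I_N).

Definition Ndeg (i : 'I_N) : nat := #|[pred j | adj i j]|.
Definition Nmax : nat := \max_(i < N) Ndeg i.

(* Block indices of z_i: (0,i) = x_i, (1,j) = p^-_{i,j}, (2,j) = p^+_{i,j},
   (3,i) = y_i, (4,j) = q^-_{i,j}, (5,j) = q^+_{i,j}, for j in N_i. *)
Definition zvalid (i : 'I_N) (b : 'I_6 * 'I_N) : bool :=
  if (nat_of_ord b.1 == 0%N) || (nat_of_ord b.1 == 3%N) then b.2 == i
  else adj i b.2.
Definition Zi (i : 'I_N) := {b : 'I_6 * 'I_N | zvalid i b}.

(* Block indices of H_i z_i and of w_i = ((v_{i,j})_j, u_i):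
   Some j (j in N_i) and None. *)
Definition hvalid (i : 'I_N) (o : option 'I_N) : bool :=
  if o is Some j then adj i j else true.
Definition Hi (i : 'I_N) := {o : option 'I_N | hvalid i o}.

(* Block indices of A_i z_i (and of lambda_i): (0,j), (1,j), (2,j), j in N_i *)
Definition Ai (i : 'I_N) := {o : 'I_3 * 'I_N | adj i o.2}.

Definition isblk (b : 'I_6 * 'I_N) (k : nat) (j : 'I_N) : R :=
  if (nat_of_ord b.1 == k) && (b.2 == j) then 1 else 0.

(* H_i z_i = ((x_i - p^+_{i,j})_j, x_i - y_i) *)
Definition Hmat (i : 'I_N) : Hi i -> Zi i -> R := fun o b =>
  match val o with
  | Some j => isblk (val b) 0 i - isblk (val b) 2 j
  | None => isblk (val b) 0 i - isblk (val b) 3 i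
  end.
Arguments Hmat i : clear implicits.

(* A_i z_i = ((x_i - p^-_{i,j})_j, (y_i - q^-_{i,j})_j, (y_i - q^+_{i,j})_j) *)
Definition Amat (i : 'I_N) : Ai i -> Zi i -> R := fun o b =>
  let j := (val o).2 in
  match nat_of_ord (val o).1 with
  | 0 => isblk (val b) 0 i - isblk (val b) 1 j
  | 1 => isblk (val b) 3 i - isblk (val b) 4 j
  | _ => isblk (val b) 3 i - isblk (val b) 5 j
  end.
Arguments Amat i : clear implicits.

Definition Dmat (d : 'I_N -> 'I_N -> R) (r : 'I_N -> R) (i : 'I_N)
  : Hi i -> Hi i -> R := fun o1 o2 =>
  if o1 == o2 then (match val o1 with Some j => d i j | None => r i end)
  else 0.
Arguments Dmat d r i : clear implicits.

Definition Smat (c : R) (i : 'I_N) : Zi i -> Zi i -> R := fun b1 b2 =>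
  kabs (kmul (ktr (Amat i)) (Amat i)) b1 b2
  + c^-1 * kabs (kmul (ktr (Hmat i)) (Hmat i)) b1 b2.
Arguments Smat c i : clear implicits.
Definition AtA (i : 'I_N) : Zi i -> Zi i -> R := kmul (ktr (Amat i)) (Amat i).
Arguments AtA i : clear implicits.
Definition Umat (c : R) (i : 'I_N) : Zi i -> Zi i -> R := fun b1 b2 =>
  kmul (ktr (Hmat i)) (Hmat i) b1 b2 + c * AtA i b1 b2 + c * Smat c i b1 b2.
Arguments Umat c i : clear implicits.

Definition zconf := forall i : 'I_N, Zi i -> 'rV[R]_n.
Definition wconf := forall i : 'I_N, Hi i -> 'rV[R]_n.
Definition lconf := forall i : 'I_N, Ai i -> 'rV[R]_n.

Definition Gi d r (i : 'I_N) (zi : Zi i -> 'rV[R]_n) (wi : Hi i -> 'rV[R]_n) : R :=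
  2^-1 * bnorm2 (kapp (Hmat i) zi) - bdot wi (kapp (Dmat d r i) (kapp (Hmat i) zi)).
Arguments Gi d r i zi wi : clear implicits.

(* L_i without the indicator term delta_{B^{N_i+1}}(w_i) *)
Definition Li d r (c : R) (i : 'I_N) (zi : Zi i -> 'rV[R]_n)
  (wi : Hi i -> 'rV[R]_n) (li : Ai i -> 'rV[R]_n) : R :=
  Gi d r i zi wi + bdot li (kapp (Amat i) zi)
  + c / 2 * bnorm2 (kapp (Amat i) zi).
Arguments Li d r c i zi wi li : clear implicits.

Definition Lag d r (c : R) (z : zconf) (w : wconf) (l : lconf) : R :=
  \sum_(i < N) Li d r c i (z i) (w i) (l i).

Definition inballs (i : 'I_N) (wi : Hi i -> 'rV[R]_n) : Prop :=
  forall o, vnorm2 (wi o) <= 1.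
Arguments inballs i wi : clear implicits.

Definition inX (anchors : {set 'I_N}) (a : 'I_N -> 'rV[R]_n) (z : zconf) : Prop :=
  forall i, i \in anchors -> forall b : Zi i, val b = (inord 0, i) -> z i b = a i.

Definition inY (z : zconf) : Prop :=
  forall (i j : 'I_N) (bi : Zi i) (bj : Zi j),
    ((val bi = (inord 2, j) /\ val bj = (inord 1, i)) \/
     (val bi = (inord 5, j) /\ val bj = (inord 4, i))) ->
    z i bi = z j bj.

Definition zobj d r (c : R) (zt : zconf) (wt : wconf) (lt : lconf) (z : zconf) : R :=
  \sum_(i < N) (Li d r c i (z i) (wt i) (lt i)
                + c / 2 * bqf (Smat c i) (bsub (z i) (zt i))).

(* objective of the w-subproblem (indicator encoded as the constraint inballs) *)
Definition wobj d r (c rho : R) (z1 : zconf) (wt : wconf) (lt : lconf) (w : wconf) : R :=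
  \sum_(i < N) (Li d r c i (z1 i) (w i) (lt i) + rho / 2 * bnorm2 (bsub (w i) (wt i))).

End Network.

Arguments Hmat {R N adj} i _ _.
Arguments Amat {R N adj} i _ _.
Arguments AtA {R N adj} i _ _.
Arguments Smat {R N adj} c i _ _.
Arguments Umat {R N adj} c i _ _.
Arguments Dmat {R N adj} d r i _ _.
Arguments Gi {R N n adj} d r i zi wi.
Arguments Li {R N n adj} d r c i zi wi li.
Arguments inballs {R N n adj} i wi.
Arguments zconf R {N} n adj.
Arguments wconf R {N} n adj.
Arguments lconf R {N} n adj.

(* Main.v *)
Require Import Defs.
From HB Require Import structures.
From mathcomp Require Import all_boot all_order all_algebra.
From mathcomp Require Import ring lra.
Import Order.TTheory GRing.Theory Num.Theory.
Local Open Scope ring_scope.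
Set Implicit Arguments. Unset Strict Implicit. Unset Printing Implicit Defensive.

Section Vec.
Variables (R : realFieldType) (n : nat).
Local Notation vec := 'rV[R]_n.

Lemma vdotC (u v : vec) : vdot u v = vdot v u.
Proof. by apply: eq_bigr => k _; rewrite mulrC. Qed.
Lemma vdotDl (u v w : vec) : vdot (u + v) w = vdot u w + vdot v w.
Proof. rewrite /vdot -big_split; apply: eq_bigr => k _; by rewrite mxE mulrDl. Qed.
Lemma vdotZl a (u w : vec) : vdot (a *: u) w = a * vdot u w.
Proof. rewrite /vdot mulr_sumr; apply: eq_bigr => k _; by rewrite mxE mulrA. Qed.
Lemma vdotNl (u w : vec) : vdot (- u) w = - vdot u w.
Proof. by rewrite -scaleN1r vdotZl mulN1r. Qed.
Lemma vdotBl (u v w : vec) : vdot (u - v) w = vdot u w - vdot v w.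
Proof. by rewrite vdotDl vdotNl. Qed.
Lemma vdot0l (w : vec) : vdot 0 w = 0.
Proof. by rewrite -(scale0r (0 : vec)) vdotZl mul0r. Qed.
Lemma vdotDr (u v w : vec) : vdot w (u + v) = vdot w u + vdot w v.
Proof. by rewrite !(vdotC w) vdotDl. Qed.
Lemma vdotZr a (u w : vec) : vdot w (a *: u) = a * vdot w u.
Proof. by rewrite !(vdotC w) vdotZl. Qed.
Lemma vdotNr (u w : vec) : vdot w (- u) = - vdot w u.
Proof. by rewrite !(vdotC w) vdotNl. Qed.
Lemma vdotBr (u v w : vec) : vdot w (u - v) = vdot w u - vdot w v.
Proof. by rewrite !(vdotC w) vdotBl. Qed.
Lemma vdot_suml (I : finType) (F : I -> vec) w :
  vdot (\sum_i F i) w = \sum_i vdot (F i) w.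
Proof.
rewrite /vdot; transitivity (\sum_k \sum_i F i ord0 k * w ord0 k).
  by apply: eq_bigr => k _; rewrite summxE big_distrl.
exact: exchange_big.
Qed.
Lemma vdot_sumr (I : finType) (F : I -> vec) w :
  vdot w (\sum_i F i) = \sum_i vdot w (F i).
Proof. rewrite vdotC vdot_suml; apply: eq_bigr => i _; exact: vdotC. Qed.
Lemma vnorm2_ge0 (u : vec) : 0 <= vnorm2 u.
Proof. apply: sumr_ge0 => k _; by rewrite -expr2 sqr_ge0. Qed.
Lemma vyoung (u v : vec) : 2 * vdot u v <= vnorm2 u + vnorm2 v.
Proof.
have := vnorm2_ge0 (u - v); rewrite /vnorm2 vdotBl !vdotBr (vdotC v u); lra.
Qed.
Lemma vyoung_abs (u v : vec) : 2 * `|vdot u v| <= vnorm2 u + vnorm2 v.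
Proof.
have h1 := vyoung u v; have h2 := vyoung (- u) v.
rewrite vdotNl /vnorm2 vdotNl vdotNr opprK -/(vnorm2 u) in h2.
case: (lerP 0 (vdot u v)) => h; [rewrite ger0_norm // | rewrite ltr0_norm //]; lra.
Qed.
Lemma vcs (I : finType) (w : I -> R) (f : I -> vec) : (forall i, 0 <= w i) ->
  vnorm2 (\sum_i w i *: f i) <= (\sum_i w i) * (\sum_i w i * vnorm2 (f i)).
Proof.
move=> w0.
have E : vnorm2 (\sum_i w i *: f i) = \sum_i \sum_j (w i * w j) * vdot (f i) (f j).
  rewrite /vnorm2 vdot_suml; apply: eq_bigr => i _.
  rewrite vdotZl vdot_sumr mulr_sumr; apply: eq_bigr => j _.
  by rewrite vdotZr mulrA.
have E2 : (\sum_i w i) * (\sum_i w i * vnorm2 (f i))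
   = \sum_i \sum_j (w i * w j) * vnorm2 (f j).
  rewrite mulr_suml; apply: eq_bigr => i _; rewrite mulr_sumr.
  by apply: eq_bigr => j _; rewrite mulrA.
have E3 : (\sum_i w i) * (\sum_i w i * vnorm2 (f i))
   = \sum_i \sum_j (w i * w j) * vnorm2 (f i).
  rewrite mulrC mulr_suml; apply: eq_bigr => i _; rewrite mulr_sumr.
  by apply: eq_bigr => j _; rewrite mulrAC.
rewrite E; apply: (@le_trans _ _ (\sum_i \sum_j (w i * w j) * ((vnorm2 (f i) + vnorm2 (f j)) / 2))).
  apply: ler_sum => i _; apply: ler_sum => j _; apply: ler_wpM2l.
    exact: mulr_ge0.
  have := vyoung (f i) (f j); lra.
have -> : \sum_i \sum_j (w i * w j) * ((vnorm2 (f i) + vnorm2 (f j)) / 2)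
  = ((\sum_i \sum_j (w i * w j) * vnorm2 (f i)) + (\sum_i \sum_j (w i * w j) * vnorm2 (f j))) / 2.
  rewrite -big_split mulr_suml; apply: eq_bigr => i _.
  rewrite -big_split mulr_suml; apply: eq_bigr => j _ /=. ring.
rewrite -E2 -E3; lra.
Qed.
End Vec.
Section Blk.
Variables (R : realFieldType) (n : nat).
Local Notation vec := 'rV[R]_n.

Lemma bdot_ext (T : finType) (z1 z2 w1 w2 : T -> vec) :
  (forall t, z1 t = z2 t) -> (forall t, w1 t = w2 t) -> bdot z1 w1 = bdot z2 w2.
Proof. by move=> h1 h2; apply: eq_bigr => t _; rewrite h1 h2. Qed.
Lemma bdotC (T : finType) (z w : T -> vec) : bdot z w = bdot w z.
Proof. by apply: eq_bigr => t _; rewrite vdotC. Qed.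
Lemma bdotDl (T : finType) (z1 z2 w : T -> vec) :
  bdot (fun t => z1 t + z2 t) w = bdot z1 w + bdot z2 w.
Proof. by rewrite /bdot -big_split; apply: eq_bigr => t _; rewrite vdotDl. Qed.
Lemma bdotZl (T : finType) a (z w : T -> vec) :
  bdot (fun t => a *: z t) w = a * bdot z w.
Proof. by rewrite /bdot mulr_sumr; apply: eq_bigr => t _; rewrite vdotZl. Qed.
Lemma bdotNl (T : finType) (z w : T -> vec) :
  bdot (fun t => - z t) w = - bdot z w.
Proof. by rewrite /bdot -sumrN; apply: eq_bigr => t _; rewrite vdotNl. Qed.
Lemma bdotBl (T : finType) (z1 z2 w : T -> vec) :
  bdot (bsub z1 z2) w = bdot z1 w - bdot z2 w.
Proof. by rewrite /bsub bdotDl bdotNl. Qed.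
Lemma bdotDr (T : finType) (z1 z2 w : T -> vec) :
  bdot w (fun t => z1 t + z2 t) = bdot w z1 + bdot w z2.
Proof. by rewrite !(bdotC w) bdotDl. Qed.
Lemma bdotNr (T : finType) (z w : T -> vec) :
  bdot w (fun t => - z t) = - bdot w z.
Proof. by rewrite !(bdotC w) bdotNl. Qed.
Lemma bdotZr (T : finType) a (z w : T -> vec) :
  bdot w (fun t => a *: z t) = a * bdot w z.
Proof. by rewrite !(bdotC w) bdotZl. Qed.
Lemma bdotBr (T : finType) (z1 z2 w : T -> vec) :
  bdot w (bsub z1 z2) = bdot w z1 - bdot w z2.
Proof. by rewrite !(bdotC w) bdotBl. Qed.
Lemma bnorm2_ge0 (T : finType) (z : T -> vec) : 0 <= bnorm2 z.
Proof. apply: sumr_ge0 => t _; exact: vnorm2_ge0. Qed.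
Lemma bnorm2N (T : finType) (z : T -> vec) : bnorm2 (fun t => - z t) = bnorm2 z.
Proof. by rewrite /bnorm2 bdotNl bdotNr opprK. Qed.
Lemma byoung (T : finType) (z w : T -> vec) : 2 * bdot z w <= bnorm2 z + bnorm2 w.
Proof.
rewrite /bnorm2 /bdot mulr_sumr -big_split; apply: ler_sum => t _; exact: vyoung.
Qed.
Lemma byoung_e (T : finType) e (z w : T -> vec) : 0 < e ->
  2 * bdot z w <= e * bnorm2 z + e^-1 * bnorm2 w.
Proof.
move=> e0; have := byoung (fun t => e *: z t) w.
rewrite bdotZl /bnorm2 bdotZl bdotZr -/(bnorm2 z) -/(bnorm2 w) => h.
have he : e * e^-1 = 1 by rewrite mulfV // gt_eqF.
rewrite -(ler_pM2l e0) mulrDr [e * (e^-1 * _)]mulrA he mul1r; lra.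
Qed.
Lemma vyoung_e e (u v : vec) : 0 < e ->
  2 * vdot u v <= e * vnorm2 u + e^-1 * vnorm2 v.
Proof.
move=> e0; have := vyoung (e *: u) v.
rewrite vdotZl /vnorm2 vdotZl vdotZr -/(vnorm2 u) -/(vnorm2 v) => h.
have he : e * e^-1 = 1 by rewrite mulfV // gt_eqF.
rewrite -(ler_pM2l e0) mulrDr [e * (e^-1 * _)]mulrA he mul1r; lra.
Qed.
Lemma bnorm2_3 (T : finType) (x y z : T -> vec) :
  bnorm2 (fun t => x t + y t + z t) <= 3 * (bnorm2 x + bnorm2 y + bnorm2 z).
Proof.
rewrite /bnorm2 /bdot -!big_split mulr_sumr; apply: ler_sum => t _ /=.
rewrite !vdotDl !vdotDr.
have := vyoung (x t) (y t); have := vyoung (x t) (z t); have := vyoung (y t) (z t).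
rewrite /vnorm2 (vdotC (y t) (x t)) (vdotC (z t) (x t)) (vdotC (z t) (y t)); lra.
Qed.
Lemma bnorm2_2e (T : finType) e (x y : T -> vec) : 0 < e ->
  bnorm2 (fun t => x t + y t) <= (1 + e) * bnorm2 x + (1 + e^-1) * bnorm2 y.
Proof.
move=> e0; rewrite /bnorm2 /bdot !mulr_sumr -big_split; apply: ler_sum => t _ /=.
rewrite !vdotDl !vdotDr.
have := vyoung_e (x t) (y t) e0.
rewrite /vnorm2 (vdotC (y t) (x t)); lra.
Qed.
End Blk.
Section Ker.
Variables (R : realFieldType) (n : nat).
Local Notation vec := 'rV[R]_n.
Implicit Types (T U V : finType).

Lemma kapp_ext T U (M : U -> T -> R) (z1 z2 : T -> vec) u :
  (forall t, z1 t = z2 t) -> kapp M z1 u = kapp M z2 u.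
Proof. by move=> h; apply: eq_bigr => t _; rewrite h. Qed.
Lemma kappK_ext T U (M1 M2 : U -> T -> R) (z : T -> vec) u :
  (forall t, M1 u t = M2 u t) -> kapp M1 z u = kapp M2 z u.
Proof. by move=> h; apply: eq_bigr => t _; rewrite h. Qed.
Lemma kappD T U (M : U -> T -> R) (z1 z2 : T -> vec) u :
  kapp M (fun t => z1 t + z2 t) u = kapp M z1 u + kapp M z2 u.
Proof. by rewrite /kapp -big_split; apply: eq_bigr => t _; rewrite scalerDr. Qed.
Lemma kappZ T U (M : U -> T -> R) a (z : T -> vec) u :
  kapp M (fun t => a *: z t) u = a *: kapp M z u.
Proof.
rewrite /kapp scaler_sumr; apply: eq_bigr => t _; by rewrite !scalerA mulrC.
Qed.
Lemma kappN T U (M : U -> T -> R) (z : T -> vec) u :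
  kapp M (fun t => - z t) u = - kapp M z u.
Proof. rewrite -scaleN1r -kappZ; apply: kapp_ext => t; by rewrite scaleN1r. Qed.
Lemma kappB T U (M : U -> T -> R) (z1 z2 : T -> vec) u :
  kapp M (bsub z1 z2) u = kapp M z1 u - kapp M z2 u.
Proof. by rewrite /bsub kappD kappN. Qed.
Lemma kappKD T U (M1 M2 : U -> T -> R) (z : T -> vec) u :
  kapp (fun u t => M1 u t + M2 u t) z u = kapp M1 z u + kapp M2 z u.
Proof. by rewrite /kapp -big_split; apply: eq_bigr => t _; rewrite scalerDl. Qed.
Lemma kappKZ T U (M : U -> T -> R) a (z : T -> vec) u :
  kapp (fun u t => a * M u t) z u = a *: kapp M z u.
Proof. by rewrite /kapp scaler_sumr; apply: eq_bigr => t _; rewrite scalerA. Qed.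
Lemma kapp_kmul T U V (M : U -> T -> R) (M' : T -> V -> R) (z : V -> vec) u :
  kapp M (kapp M' z) u = kapp (kmul M M') z u.
Proof.
rewrite /kapp /kmul.
transitivity (\sum_t \sum_v (M u t * M' t v) *: z v).
  by apply: eq_bigr => t _; rewrite scaler_sumr; apply: eq_bigr => v _; rewrite scalerA.
rewrite exchange_big; apply: eq_bigr => v _; by rewrite scaler_suml.
Qed.
Lemma bdot_kapp T U (M : U -> T -> R) (z : T -> vec) (w : U -> vec) :
  bdot (kapp M z) w = bdot z (kapp (ktr M) w).
Proof.
rewrite /bdot /kapp /ktr.
transitivity (\sum_u \sum_t M u t * vdot (z t) (w u)).
  by apply: eq_bigr => u _; rewrite vdot_suml; apply: eq_bigr => t _; rewrite vdotZl.
rewrite exchange_big; apply: eq_bigr => t _; rewrite vdot_sumr.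
by apply: eq_bigr => u _; rewrite vdotZr.
Qed.
Lemma bqf_bdot T (M : T -> T -> R) (z : T -> vec) : bqf M z = bdot z (kapp M z).
Proof.
rewrite /bqf /bdot /kapp; apply: eq_bigr => t _; rewrite vdot_sumr.
by apply: eq_bigr => s _; rewrite vdotZr.
Qed.
Lemma bqf_ext T (M1 M2 : T -> T -> R) (z1 z2 : T -> vec) :
  (forall t s, M1 t s = M2 t s) -> (forall t, z1 t = z2 t) -> bqf M1 z1 = bqf M2 z2.
Proof.
move=> hM hz; apply: eq_bigr => t _; apply: eq_bigr => s _; by rewrite hM !hz.
Qed.
Lemma bqfN T (M : T -> T -> R) (z : T -> vec) : bqf M (fun t => - z t) = bqf M z.
Proof.
apply: eq_bigr => t _; apply: eq_bigr => s _; by rewrite vdotNl vdotNr opprK.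
Qed.
Lemma bqfKD T (M1 M2 : T -> T -> R) (z : T -> vec) :
  bqf (fun t s => M1 t s + M2 t s) z = bqf M1 z + bqf M2 z.
Proof.
rewrite /bqf -big_split; apply: eq_bigr => t _; rewrite -big_split.
by apply: eq_bigr => s _; rewrite mulrDl.
Qed.
Lemma bqfKZ T (M : T -> T -> R) a (z : T -> vec) :
  bqf (fun t s => a * M t s) z = a * bqf M z.
Proof.
rewrite /bqf mulr_sumr; apply: eq_bigr => t _; rewrite mulr_sumr.
by apply: eq_bigr => s _; rewrite mulrA.
Qed.
Lemma bnorm2_kapp T U (M : U -> T -> R) (z : T -> vec) :
  bnorm2 (kapp M z) = bqf (kmul (ktr M) M) z.
Proof.
rewrite /bnorm2 bdot_kapp bqf_bdot; apply: bdot_ext => // t.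
exact: kapp_kmul.
Qed.
Lemma bqf_gram_ge0 T U (M : U -> T -> R) (z : T -> vec) :
  0 <= bqf (kmul (ktr M) M) z.
Proof. rewrite -bnorm2_kapp; exact: bnorm2_ge0. Qed.
End Ker.
Section D2.
Variables (R : realFieldType) (n : nat).
Local Notation vec := 'rV[R]_n.
Variables (T U : finType) (r1 r2 : U -> T).

Definition d2 (s : R) : U -> T -> R := fun u t => (t == r1 u)%:R + s * (t == r2 u)%:R.

Lemma sum_delta (V : finType) (F : V -> R) a : \sum_t (t == a)%:R * F t = F a.
Proof.
rewrite (bigD1 a) //= eqxx mul1r big1 ?addr0 // => t /negbTE ->; by rewrite mul0r.
Qed.
Lemma sum_d2 s u (F : T -> R) : \sum_t d2 s u t * F t = F (r1 u) + s * F (r2 u).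
Proof.
rewrite /d2; under eq_bigr => t _ do rewrite mulrDl -mulrA.
by rewrite big_split /= -mulr_sumr !sum_delta.
Qed.
Lemma gram_d2 s : s * s = 1 -> (forall u u', r1 u != r2 u') -> injective r2 ->
  forall u u', kmul (d2 s) (ktr (d2 s)) u u' = (r1 u == r1 u')%:R + (u == u')%:R.
Proof.
move=> hs hr inj u u'; rewrite /kmul /ktr sum_d2 /d2.
rewrite (negbTE (hr u u')) [r2 u == r1 u']eq_sym (negbTE (hr u' u)) (inj_eq inj).
by rewrite !mulr0 !addr0 add0r mulrA hs mul1r.
Qed.
Lemma fiber_sq (f : U -> T) (w : U -> vec) :
  \sum_u \sum_u' (f u == f u')%:R * vdot (w u) (w u')
  = \sum_t vnorm2 (\sum_u (f u == t)%:R *: w u).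
Proof.
symmetry.
transitivity (\sum_t \sum_u \sum_u' ((f u == t)%:R * (f u' == t)%:R) * vdot (w u) (w u')).
  apply: eq_bigr => t _; rewrite /vnorm2 vdot_suml; apply: eq_bigr => u _.
  rewrite vdotZl vdot_sumr mulr_sumr; apply: eq_bigr => u' _.
  by rewrite vdotZr !mulrA.
rewrite exchange_big; apply: eq_bigr => u _; rewrite exchange_big.
apply: eq_bigr => u' _; rewrite -mulr_suml; congr (_ * _).
transitivity (\sum_t ((t == f u)%:R * (f u' == t)%:R : R)).
  by apply: eq_bigr => t _; rewrite eq_sym.
by rewrite sum_delta eq_sym.
Qed.
Lemma fiber_le (K : R) (f : U -> T) (w : U -> vec) : 0 <= K ->
  (forall t, \sum_u (f u == t)%:R <= K) ->
  \sum_t vnorm2 (\sum_u (f u == t)%:R *: w u) <= K * bnorm2 w.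
Proof.
move=> K0 hK.
apply: (@le_trans _ _ (\sum_t K * \sum_u (f u == t)%:R * vnorm2 (w u))).
  apply: ler_sum => t _.
  apply: (@le_trans _ _ ((\sum_u (f u == t)%:R) * (\sum_u (f u == t)%:R * vnorm2 (w u)))).
    by apply: vcs => u; rewrite ler0n.
  apply: ler_wpM2r => //; apply: sumr_ge0 => u _.
  by apply: mulr_ge0; [rewrite ler0n | exact: vnorm2_ge0].
rewrite -mulr_sumr exchange_big /bnorm2 /bdot; apply: ler_wpM2l; first exact: K0.
apply: ler_sum => u _; rewrite -mulr_suml.
have -> : \sum_t (f u == t)%:R = 1 :> R.
  transitivity (\sum_t (t == f u)%:R * (1 : R)).
    by apply: eq_bigr => t _; rewrite eq_sym mulr1.
  by rewrite sum_delta.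
by rewrite mul1r.
Qed.

Lemma bnorm2_ktr_d2 s (w : U -> vec) : s * s = 1 -> (forall u u', r1 u != r2 u') ->
  injective r2 ->
  bnorm2 (kapp (ktr (d2 s)) w) = bnorm2 w + \sum_t vnorm2 (\sum_u (r1 u == t)%:R *: w u).
Proof.
move=> hs hr inj; rewrite bnorm2_kapp.
rewrite (@bqf_ext _ _ _ _ (fun u u' => (r1 u == r1 u')%:R + (u == u')%:R) w w); last by [].
  rewrite bqfKD -fiber_sq addrC; congr (_ + _).
  rewrite /bqf /bnorm2 /bdot; apply: eq_bigr => u _.
  transitivity (\sum_u' (u' == u)%:R * vdot (w u) (w u')).
    by apply: eq_bigr => u' _; rewrite eq_sym.
  by rewrite sum_delta.
move=> u u'; exact: gram_d2.
Qed.
Lemma ktr_d2_lb s (w : U -> vec) : s * s = 1 -> (forall u u', r1 u != r2 u') ->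
  injective r2 -> bnorm2 w <= bnorm2 (kapp (ktr (d2 s)) w).
Proof.
move=> hs hr inj; rewrite bnorm2_ktr_d2 // lerDl; apply: sumr_ge0 => t _; exact: vnorm2_ge0.
Qed.
Lemma ktr_d2_ub s K (w : U -> vec) : s * s = 1 -> (forall u u', r1 u != r2 u') ->
  injective r2 -> 0 <= K -> (forall t, \sum_u (r1 u == t)%:R <= K) ->
  bnorm2 (kapp (ktr (d2 s)) w) <= (1 + K) * bnorm2 w.
Proof.
move=> hs hr inj K0 hK; rewrite bnorm2_ktr_d2 // mulrDl mul1r lerD2l.
exact: fiber_le.
Qed.
Lemma d2_prod u t t' : r1 u != r2 u ->
  d2 (-1) u t * d2 (-1) u t' = (if t == t' then 1 else -1) * (d2 1 u t * d2 1 u t').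
Proof.
move=> hr; rewrite /d2.
have hr' : r2 u != r1 u by rewrite eq_sym.
have [->|n1] := eqVneq t (r1 u); [rewrite ?eqxx ?(negbTE hr) |
  have [->|n2] := eqVneq t (r2 u); [rewrite ?eqxx ?(negbTE hr') | rewrite ?(negbTE n1) ?(negbTE n2)]];
have [->|n3] := eqVneq t' (r1 u); try (rewrite ?eqxx ?(negbTE hr));
try (have [->|n4] := eqVneq t' (r2 u); [rewrite ?eqxx ?(negbTE hr') | rewrite ?(negbTE n3) ?(negbTE n4)]);
rewrite /= ?eqxx ?(negbTE hr) ?(negbTE hr'); try ring.
all: try rewrite [r2 u == t']eq_sym; try rewrite [r1 u == t']eq_sym; case: ifP => h; rewrite ?h /=; ring.
Qed.
Lemma kabs_d2 : (forall u, r1 u != r2 u) ->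
  forall t t', kabs (kmul (ktr (d2 (-1))) (d2 (-1))) t t' = kmul (ktr (d2 1)) (d2 1) t t'.
Proof.
move=> hr t t'; rewrite /kabs /kmul /ktr.
rewrite (eq_bigr _ (fun u _ => d2_prod t t' (hr u))) -mulr_sumr normrM.
have P : 0 <= \sum_u d2 1 u t * d2 1 u t'.
  apply: sumr_ge0 => u _; apply: mulr_ge0; apply: addr_ge0; rewrite ?mul1r ler0n //.
rewrite (ger0_norm P); case: (t == t'); by rewrite ?normr1 ?normrN1 mul1r.
Qed.
End D2.
Lemma big_opt (R : realFieldType) (T : finType) (F : option T -> R) :
  \sum_o F o = F None + \sum_x F (Some x).
Proof.
rewrite (bigD1 None) //=; congr (_ + _).
rewrite (reindex_omap (Some : T -> option T) id) /=; last by case.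
by apply: eq_bigl => x; rewrite eqxx.
Qed.

Lemma sum_sig (R : realFieldType) (I : finType) (P : pred I) (F : I -> R) :
  \sum_(x : {x | P x}) F (val x) = \sum_(i | P i) F i.
Proof.
rewrite [RHS](reindex_omap (val : {x | P x} -> I) insub); last first.
  by move=> i Pi; rewrite insubT.
by apply: eq_bigl=> -[i iA]/=; rewrite insubT ?iA /= eqxx ?andbT.
Qed.

Section Net.
Variables (R : realFieldType) (N : nat) (adj : rel 'I_N) (i : 'I_N).

Lemma vx : zvalid adj i (inord 0, i).
Proof. by rewrite /zvalid /= inordK ?eqxx //=. Qed.
Lemma vy : zvalid adj i (inord 3, i).
Proof. by rewrite /zvalid /= inordK ?eqxx //=. Qed.
Definition xb : Zi adj i := exist _ (inord 0, i) vx.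
Definition yb : Zi adj i := exist _ (inord 3, i) vy.

Definition typA (k : 'I_3) : nat := if nat_of_ord k == 0%N then 1%N else if nat_of_ord k == 1%N then 4%N else 5%N.
Lemma typA_lt k : (typA k < 6)%N.
Proof. by rewrite /typA; case: ifP => //; case: ifP. Qed.
Lemma vA (u : Ai adj i) : zvalid adj i (inord (typA (val u).1), (val u).2).
Proof.
rewrite /zvalid /= inordK ?typA_lt //.
suff -> : (typA (val u).1 == 0%N) || (typA (val u).1 == 3%N) = false by exact: valP u.
by rewrite /typA; case: ifP => _ //; case: ifP.
Qed.
Definition r2A (u : Ai adj i) : Zi adj i := exist (zvalid adj i) _ (vA u).
Definition r1A (u : Ai adj i) : Zi adj i := if nat_of_ord (val u).1 == 0%N then xb else yb.

Definition eH (o : option 'I_N) : 'I_6 * 'I_N :=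
  match o with Some j => (inord 2, j) | None => (inord 3, i) end.
Lemma vH (u : Hi adj i) : zvalid adj i (eH (val u)).
Proof.
case: u => [[j|] h] /=; rewrite /zvalid /= inordK ?eqxx //=.
Qed.
Definition r2H (u : Hi adj i) : Zi adj i := exist (zvalid adj i) _ (vH u).
Definition r1H (u : Hi adj i) : Zi adj i := xb.

Lemma blk_eq (b e : Zi adj i) :
  (b == e) = ((nat_of_ord (val b).1 == nat_of_ord (val e).1) && ((val b).2 == (val e).2)).
Proof. by case: b => [[b1 b2] hb]; case: e => [[e1 e2] he]; rewrite -val_eqE /= xpair_eqE. Qed.
Lemma isblkE (b : 'I_6 * 'I_N) k j :
  isblk R b k j = ((nat_of_ord b.1 == k) && (b.2 == j))%:R.
Proof. by rewrite /isblk; case: ifP. Qed.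

Lemma AmatE u b : Amat i u b = d2 r1A r2A (-1 : R) u b.
Proof.
rewrite /Amat /d2 !blk_eq !isblkE /r1A /r2A.
case: u => [[[k hk] j] h] /=.
move: h; case: k hk => [|[|[|k]]] hk h //=; rewrite /typA /= !inordK //; by rewrite mulN1r.

Qed.

Lemma HmatE u b : Hmat i u b = d2 r1H r2H (-1 : R) u b.
Proof.
rewrite /Hmat /d2 !blk_eq !isblkE /r1H /r2H.
case: u => [[j|] h] /=; rewrite /eH /= !inordK // ?isblkE; by rewrite mulN1r.
Qed.

Lemma typA_eq (k k' : 'I_3) : (typA k == typA k') = (k == k').
Proof.
case: k => [[|[|[|k]]] hk] //; case: k' => [[|[|[|k']]] hk'] //.
Qed.
Lemma hrA u u' : r1A u != r2A u'.
Proof.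
rewrite blk_eq negb_and; apply/orP; left.
rewrite /r1A /=; rewrite inordK ?typA_lt //.
case: ifP => _ /=; rewrite inordK //; rewrite /typA; case: ifP => _ //; by case: ifP.
Qed.
Lemma injA : injective r2A.
Proof.
move=> [[k j] hu] [[k' j'] hu'] /eqP; rewrite blk_eq /= !inordK ?typA_lt // typA_eq.
by move=> /andP [/eqP e1 /eqP e2]; apply: val_inj => /=; rewrite e1 e2.
Qed.
Lemma hrH u u' : r1H u != r2H u'.
Proof.
rewrite blk_eq negb_and; apply/orP; left.
rewrite /r1H /r2H /=; case: u' => [[j|] h] /=; rewrite !inordK //.
Qed.
Lemma injH : injective r2H.
Proof.
move=> [[j|] h] [[j'|] h'] /eqP; rewrite blk_eq /= !inordK //= => e; apply: val_inj => //=.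
by rewrite (eqP e).
Qed.
Lemma xy : yb != xb.
Proof. by rewrite blk_eq /= !inordK. Qed.
Lemma ifb_mul (b : bool) (x : R) : (if b then x else 0) = b%:R * x.
Proof. by case: b; rewrite ?mul1r ?mul0r. Qed.
Lemma sum_adj : \sum_j ((adj i j)%:R : R) = (Ndeg adj i)%:R.
Proof.
rewrite /Ndeg -sum1_card natr_sum [RHS]big_mkcond /=; apply: eq_bigr => j _.
by rewrite inE; case: (adj i j).
Qed.
Lemma fibA t : \sum_(u : Ai adj i) ((r1A u == t)%:R : R) <= 2 * (Ndeg adj i)%:R.
Proof.
pose F := fun e : 'I_3 * 'I_N => (((if nat_of_ord e.1 == 0%N then xb else yb) == t)%:R : R).
have -> : \sum_(u : Ai adj i) ((r1A u == t)%:R : R) = \sum_(e | adj i e.2) F e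
  := sum_sig (fun e : 'I_3 * 'I_N => adj i e.2) F.
have E : \sum_(e | adj i e.2) F e = \sum_k \sum_j (adj i j)%:R * F (k,j).
  by rewrite big_mkcond pair_bigA; apply: eq_bigr => -[k j] _ /=; rewrite ifb_mul.
rewrite E /F /=.
under eq_bigr => k _ do rewrite -big_distrl /= sum_adj.
rewrite -mulr_sumr mulrC ler_wpM2r // !big_ord_recl big_ord0 /=.
case: eqP => [<-|_]; rewrite ?(negbTE xy) /=; case: (yb == t) => //=; lra.
Qed.
Lemma fibH t : \sum_(u : Hi adj i) ((r1H u == t)%:R : R) <= (Ndeg adj i)%:R + 1.
Proof.
apply: (@le_trans _ _ (\sum_(u : Hi adj i) (1 : R))).
  by apply: ler_sum => u _; case: (r1H u == t).
have -> : \sum_(u : Hi adj i) (1 : R) = \sum_(o | hvalid adj i o) (fun _ => 1 : R) o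
  := sum_sig (hvalid adj i) (fun _ => 1 : R).
rewrite big_mkcond big_opt /= -sum_adj addrC lerD2r.
by apply: ler_sum => j _ /=; case: (adj i j).
Qed.
End Net.
Lemma numfin (R : realFieldType) (c Nd Nm L V1 a p q NX1 NAv NP NQ NS : R) :
  0 < c -> 0 <= Nd -> Nd <= Nm -> 0 <= V1 -> 0 <= a -> 0 <= p -> 0 <= q ->
  c * c * L <= 3 * (NX1 + c * c * NAv + c * c * NS) ->
  NX1 <= (1 + (Nd + 1)) * V1 ->
  NAv <= (1 + 2 * Nd) * a ->
  c * c * NS <= c * (c + 2^-1) * NP + (1 + 2 * c) * NQ ->
  NP <= (1 + 2 * Nd) * p ->
  NQ <= (1 + (Nd + 1)) * q ->
  c * L <= 3 * (Nm + 2) / c * V1 + 3 * c * (2 * Nm + 1) * a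
           + 3 * (1 + 2 * c) * (2 + Nm) * (p + c^-1 * q).
Proof.
move=> c0 Nd0 hN V10 a0 p0 q0 H1 H2 H3 H4 H5 H6.
have cn : c != 0 by rewrite gt_eqF.
rewrite -(ler_pM2l c0).
have -> : c * (3 * (Nm + 2) / c * V1 + 3 * c * (2 * Nm + 1) * a
           + 3 * (1 + 2 * c) * (2 + Nm) * (p + c^-1 * q))
  = 3 * (Nm + 2) * V1 + 3 * (c * c) * ((2 * Nm + 1) * a)
    + 3 * (c * ((1 + 2 * c) * (2 + Nm) * p)) + 3 * ((1 + 2 * c) * ((2 + Nm) * q)).
  by field.
have cc0 : 0 <= c * c by rewrite mulr_ge0 // ltW.
have h2 : NX1 <= (Nm + 2) * V1.
  apply: le_trans H2 _; apply: ler_wpM2r => //; lra.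
have h3 : c * c * NAv <= c * c * ((2 * Nm + 1) * a).
  apply: ler_wpM2l => //; apply: le_trans H3 _; apply: ler_wpM2r => //; lra.
have h5 : c * (c + 2^-1) * NP <= c * ((1 + 2 * c) * (2 + Nm) * p).
  rewrite -mulrA; apply: ler_wpM2l; first exact: ltW.
  apply: le_trans (_ : (c + 2^-1) * ((1 + 2 * Nd) * p) <= _).
    apply: ler_wpM2l => //; have : 0 < 2^-1 :> R by rewrite invr_gt0. lra.
  rewrite mulrA; apply: ler_wpM2r => //.
  have -> : (c + 2^-1) * (1 + 2 * Nd) = (1 + 2 * c) * (2^-1 + Nd) by field.
  apply: ler_wpM2l; first lra.
  have : 2^-1 <= 1 :> R by rewrite invf_le1 ?ler1n ?ltr0n.
  lra.
have h6 : (1 + 2 * c) * NQ <= (1 + 2 * c) * ((2 + Nm) * q).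
  apply: ler_wpM2l; first lra.
  apply: le_trans H6 _; apply: ler_wpM2r => //; lra.
lra.
Qed.
Section Bnds.
Variables (R : realFieldType) (N n : nat) (adj : rel 'I_N) (i : 'I_N).
Local Notation vec := 'rV[R]_n.
Local Notation Nd := ((Ndeg adj i)%:R : R).

Lemma bnorm2_ext (T : finType) (z1 z2 : T -> vec) :
  (forall t, z1 t = z2 t) -> bnorm2 z1 = bnorm2 z2.
Proof. by move=> h; apply: bdot_ext. Qed.
Lemma bnorm2Z (T : finType) a (z : T -> vec) : bnorm2 (fun t => a *: z t) = a * a * bnorm2 z.
Proof. by rewrite /bnorm2 bdotZl bdotZr mulrA. Qed.

Lemma sN1 : (-1 : R) * -1 = 1. Proof. by rewrite mulrNN mulr1. Qed.
Lemma s1 : (1 : R) * 1 = 1. Proof. by rewrite mulr1. Qed.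

Lemma A_lb (w : Ai adj i -> vec) : bnorm2 w <= bnorm2 (kapp (ktr (Amat i)) w).
Proof.
have -> : bnorm2 (kapp (ktr (Amat i)) w) = bnorm2 (kapp (ktr (d2 (@r1A _ adj i) (@r2A _ adj i) (-1 : R))) w).
  by apply: bnorm2_ext => b; apply: kappK_ext => u; rewrite /ktr AmatE.
apply: ktr_d2_lb; [exact: sN1 | exact: hrA | exact: injA].
Qed.
Lemma A_ub s (w : Ai adj i -> vec) : s * s = 1 ->
  bnorm2 (kapp (ktr (d2 (@r1A _ adj i) (@r2A _ adj i) s)) w) <= (1 + 2 * Nd) * bnorm2 w.
Proof.
move=> hs; apply: ktr_d2_ub => //; [exact: hrA | exact: injA | | exact: fibA].
by rewrite mulr_ge0 // ler0n.
Qed.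
Lemma H_ub s (w : Hi adj i -> vec) : s * s = 1 ->
  bnorm2 (kapp (ktr (d2 (@r1H _ adj i) (@r2H _ adj i) s)) w) <= (1 + (Nd + 1)) * bnorm2 w.
Proof.
move=> hs; apply: ktr_d2_ub => //; [exact: hrH | exact: injH | | exact: fibH].
by rewrite addr_ge0 // ler0n.
Qed.
Lemma Amat_ub (w : Ai adj i -> vec) :
  bnorm2 (kapp (ktr (Amat i)) w) <= (1 + 2 * Nd) * bnorm2 w.
Proof.
have -> : bnorm2 (kapp (ktr (Amat i)) w) = bnorm2 (kapp (ktr (d2 (@r1A _ adj i) (@r2A _ adj i) (-1 : R))) w).
  by apply: bnorm2_ext => b; apply: kappK_ext => u; rewrite /ktr AmatE.
exact: A_ub sN1.
Qed.
Lemma Hmat_ub (w : Hi adj i -> vec) :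
  bnorm2 (kapp (ktr (Hmat i)) w) <= (1 + (Nd + 1)) * bnorm2 w.
Proof.
have -> : bnorm2 (kapp (ktr (Hmat i)) w) = bnorm2 (kapp (ktr (d2 (@r1H _ adj i) (@r2H _ adj i) (-1 : R))) w).
  by apply: bnorm2_ext => b; apply: kappK_ext => u; rewrite /ktr HmatE.
exact: H_ub sN1.
Qed.
Lemma SmatE (c : R) b b' : Smat c i b b' =
  kmul (ktr (d2 (@r1A _ adj i) (@r2A _ adj i) 1)) (d2 (@r1A _ adj i) (@r2A _ adj i) 1) b b'
  + c^-1 * kmul (ktr (d2 (@r1H _ adj i) (@r2H _ adj i) 1)) (d2 (@r1H _ adj i) (@r2H _ adj i) 1) b b'.
Proof.
rewrite /Smat.
have -> : kabs (kmul (ktr (Amat i)) (Amat i)) b b'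
  = kabs (kmul (ktr (d2 (@r1A _ adj i) (@r2A _ adj i) (-1 : R))) (d2 (@r1A _ adj i) (@r2A _ adj i) (-1))) b b'.
  by rewrite /kabs /kmul; congr `|_|; apply: eq_bigr => u _; rewrite /ktr !AmatE.
have -> : kabs (kmul (ktr (Hmat i)) (Hmat i)) b b'
  = kabs (kmul (ktr (d2 (@r1H _ adj i) (@r2H _ adj i) (-1 : R))) (d2 (@r1H _ adj i) (@r2H _ adj i) (-1))) b b'.
  by rewrite /kabs /kmul; congr `|_|; apply: eq_bigr => u _; rewrite /ktr !HmatE.
by rewrite !kabs_d2 // => u; [exact: hrH | exact: hrA].
Qed.
End Bnds.
Section PerI.
Variables (R : realFieldType) (N n : nat) (adj : rel 'I_N) (i : 'I_N).
Local Notation vec := 'rV[R]_n.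
Local Notation Nd := ((Ndeg adj i)%:R : R).

Lemma perI (c Nm : R) (z : Zi adj i -> vec) (Lam : Ai adj i -> vec)
  (v1 : Hi adj i -> vec) (v2 v3 : Zi adj i -> vec) :
  0 < c -> Nd <= Nm ->
  (forall o, Lam o = c *: kapp (Amat i) z o) ->
  (forall b, kapp (ktr (Amat i)) Lam b = kapp (ktr (Hmat i)) v1 b
       + c *: kapp (AtA i) v2 b + c *: kapp (Smat c i) v3 b) ->
  c * bnorm2 (kapp (Amat i) z) <= 3 * (Nm + 2) / c * bnorm2 v1
     + 3 * c * (2 * Nm + 1) * bqf (AtA i) v2
     + 3 * (1 + 2 * c) * (2 + Nm) * bqf (Smat c i) v3.
Proof.
move=> c0 hN hLam hid.
pose A1 := d2 (@r1A _ adj i) (@r2A _ adj i) (1 : R).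
pose H1 := d2 (@r1H _ adj i) (@r2H _ adj i) (1 : R).
pose P := kmul (ktr A1) A1; pose Q := kmul (ktr H1) H1.
have bS : bqf (Smat c i) v3 = bqf P v3 + c^-1 * bqf Q v3.
  rewrite -bqfKZ -bqfKD; apply: bqf_ext => // b b'; exact: SmatE.
have kS : forall b, kapp (Smat c i) v3 b = kapp P v3 b + c^-1 *: kapp Q v3 b.
  move=> b; rewrite -kappKZ -kappKD; apply: kappK_ext => b'; exact: SmatE.
have cn : c != 0 by rewrite gt_eqF.
rewrite bS.
apply: (@numfin R c Nd Nm _ _ _ _ _ (bnorm2 (kapp (ktr (Hmat i)) v1))
   (bnorm2 (kapp (AtA i) v2)) (bnorm2 (kapp P v3)) (bnorm2 (kapp Q v3))
   (bnorm2 (kapp (Smat c i) v3))) => //.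
- exact: bnorm2_ge0.
- exact: bqf_gram_ge0.
- exact: bqf_gram_ge0.
- exact: bqf_gram_ge0.
- have -> : c * c * bnorm2 (kapp (Amat i) z) = bnorm2 Lam.
    by rewrite (bnorm2_ext hLam) bnorm2Z.
  apply: le_trans (A_lb Lam) _.
  rewrite (bnorm2_ext hid).
  apply: le_trans (bnorm2_3 (kapp (ktr (Hmat i)) v1) (fun b => c *: kapp (AtA i) v2 b)
                    (fun b => c *: kapp (Smat c i) v3 b)) _.
  by rewrite !bnorm2Z.
- exact: Hmat_ub.
- have -> : bnorm2 (kapp (AtA i) v2) = bnorm2 (kapp (ktr (Amat i)) (kapp (Amat i) v2)).
    by apply: bnorm2_ext => b; rewrite kapp_kmul.
  rewrite [bqf _ _](_ : _ = bnorm2 (kapp (Amat i) v2)); first exact: Amat_ub.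
  by rewrite bnorm2_kapp.
- rewrite (bnorm2_ext kS).
  have e0 : 0 < (2 * c)^-1 by rewrite invr_gt0 mulr_gt0.
  have := bnorm2_2e (kapp P v3) (fun b => c^-1 *: kapp Q v3 b) e0.
  rewrite bnorm2Z => h.
  have cc : 0 < c * c by rewrite mulr_gt0.
  apply: le_trans (ler_wpM2l (ltW cc) h) _.
  rewrite le_eqVlt; apply/orP; left; apply/eqP; field; exact: cn.
- have -> : bnorm2 (kapp P v3) = bnorm2 (kapp (ktr A1) (kapp A1 v3)).
    by apply: bnorm2_ext => b; rewrite kapp_kmul.
  rewrite [bqf P _](_ : _ = bnorm2 (kapp A1 v3)); first by apply: A_ub; exact: s1.
  by rewrite bnorm2_kapp.
- have -> : bnorm2 (kapp Q v3) = bnorm2 (kapp (ktr H1) (kapp H1 v3)).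
    by apply: bnorm2_ext => b; rewrite kapp_kmul.
  rewrite [bqf Q _](_ : _ = bnorm2 (kapp H1 v3)); first by apply: H_ub; exact: s1.
  by rewrite bnorm2_kapp.
Qed.
End PerI.
Lemma lin_id (R : realFieldType) (n : nat) (c : R)
  (Dw1 Dw0 Hz1 Hz0 Az1 Az0 Sz1 Sz0 Zs1 Zs0 St St' L1 L0 : 'rV[R]_n) :
  Hz1 + c *: Az1 + c *: Sz1 = Dw1 - L1 + c *: St ->
  Hz0 + c *: Az0 + c *: Sz0 = Dw0 - L0 + c *: St' ->
  L1 = L0 + c *: Zs0 ->
  c *: Zs1 = ((Dw1 - Dw0) - (Hz1 - Hz0)) + c *: ((Zs1 - Zs0) - (Az1 - Az0))
             + c *: ((St - St') - (Sz1 - Sz0)).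
Proof.
move=> /rowP E1 /rowP E0 /rowP E2; apply/rowP => k.
move: (E1 k) (E0 k) (E2 k); rewrite !mxE => e1 e0 e2; lra.
Qed.

Section Aux.
Variables (R : realFieldType) (n : nat).
Local Notation vec := 'rV[R]_n.
Lemma kapp2B (T U V : finType) (M : U -> T -> R) (M' : T -> V -> R) (z1 z2 : V -> vec) u :
  kapp M (kapp M' (bsub z1 z2)) u = kapp M (kapp M' z1) u - kapp M (kapp M' z2) u.
Proof. by rewrite -kappB; apply: kapp_ext => t; rewrite kappB. Qed.
Lemma bqf_sub0 (T : finType) (M : T -> T -> R) (z : T -> vec) : bqf M (bsub z z) = 0.
Proof.
apply: big1 => t _; apply: big1 => s _; by rewrite /bsub !subrr vdot0l mulr0.
Qed.
Lemma bnorm2_sub0 (T : finType) (z : T -> vec) : bnorm2 (bsub z z) = 0.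
Proof. by apply: big1 => t _; rewrite /bsub subrr vdot0l. Qed.
Lemma bsubN (T : finType) (z1 z2 : T -> vec) t : bsub z1 z2 t = - bsub z2 z1 t.
Proof. by rewrite /bsub opprB. Qed.
End Aux.
Section Net2.
Variables (R : realFieldType) (N n : nat) (adj : rel 'I_N).
Local Notation vec := 'rV[R]_n.
Lemma kappU (c : R) (i : 'I_N) (z : Zi adj i -> vec) b :
  kapp (Umat c i) z b = kapp (ktr (Hmat i)) (kapp (Hmat i) z) b
    + c *: kapp (AtA i) z b + c *: kapp (Smat c i) z b.
Proof. by rewrite /Umat kappKD kappKD !kappKZ kapp_kmul. Qed.
Lemma Li_lam d r (c : R) (i : 'I_N) (z : Zi adj i -> vec) (w : Hi adj i -> vec)
  (l l' : Ai adj i -> vec) :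
  (forall o, l' o = l o + c *: kapp (Amat i) z o) ->
  Li d r c i z w l' = Li d r c i z w l + c * bnorm2 (kapp (Amat i) z).
Proof.
move=> h; rewrite /Li (bdot_ext (w1 := kapp (Amat i) z) (w2 := kapp (Amat i) z) h) //.
rewrite bdotDl bdotZl /bnorm2; ring.
Qed.
End Net2.

Unset Implicit Arguments.

Theorem mainTheorem3 (R : realFieldType) (N n : nat) (adj : rel 'I_N)
  (anchors : {set 'I_N}) (a : 'I_N -> 'rV[R]_n)
  (d : 'I_N -> 'I_N -> R) (r : 'I_N -> R) (c rho : R)
  (zs : nat -> zconf R n adj) (ws : nat -> wconf R n adj)
  (lam : nat -> lconf R n adj) (zt : nat -> zconf R n adj) :
  (* G is a connected simple undirected graph, N_i >= 1 *)
  (forall i j, adj i j = adj j i) ->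
  (forall i, ~~ adj i i) ->
  (forall i j, connect adj i j) ->
  (forall i, (0 < Ndeg adj i)%N) ->
  (* nonempty anchor set, measurements *)
  anchors != set0 ->
  (forall i j, adj i j -> d i j = d j i) ->
  (forall i j, adj i j -> 0 <= d i j) ->
  (forall i, 0 <= r i) ->
  0 < c -> 0 < rho ->
  (* z-update: z^{t+1} is the minimizer over X cap Y *)
  (forall t, inX anchors a (zs t.+1) /\ inY (zs t.+1) /\
     forall z : zconf R n adj, inX anchors a z -> inY z ->
       zobj d r c (zs t) (ws t) (lam t) (zs t.+1)
       <= zobj d r c (zs t) (ws t) (lam t) z) ->
  (* w-update: w^{t+1} is the minimizer (indicator = constraint w in B) *)
  (forall t, (forall i, inballs i (ws t.+1 i)) /\
     forall w : wconf R n adj, (forall i, inballs i (w i)) ->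
       wobj d r c rho (zs t.+1) (ws t) (lam t) (ws t.+1)
       <= wobj d r c rho (zs t.+1) (ws t) (lam t) w) ->
  (* lambda^0 = 0 and dual update *)
  (forall i o, lam 0%N i o = 0) ->
  (forall t i o, lam t.+1 i o = lam t i o + c *: kapp (Amat i) (zs t.+1 i) o) ->
  (* auxiliary sequence: U_i ztilde_i^{t+1} = H_i^T D_i w_i^t - A_i^T lambda_i^t + c S_i z_i^t *)
  (forall t i b, kapp (Umat c i) (zt t.+1 i) b
     = kapp (ktr (Hmat i)) (kapp (Dmat d r i) (ws t i)) b
       - kapp (ktr (Amat i)) (lam t i) b
       + c *: kapp (Smat c i) (zs t i) b) ->
  forall t : nat, (1 <= t)%N ->
  Lag d r c (zs t.+1) (ws t.+1) (lam t.+1) - Lag d r c (zs t) (ws t) (lam t)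
  <= \sum_(i < N)
     ( - (c / 2) * bqf (Smat c i) (bsub (zs t.+1 i) (zs t i))
       - rho / 2 * bnorm2 (bsub (ws t.+1 i) (ws t i))
       + 3 * ((Nmax adj)%:R + 2) / c
           * bnorm2 (bsub (kapp (Hmat i) (bsub (zt t.+1 i) (zt t i)))
                          (kapp (Dmat d r i) (bsub (ws t i) (ws t.-1 i))))
       + 3 * c * (2 * (Nmax adj)%:R + 1)
           * bqf (AtA i) (bsub (bsub (zt t.+1 i) (zt t i))
                               (bsub (zs t.+1 i) (zs t i)))
       + 3 * (1 + 2 * c) * (2 + (Nmax adj)%:R)
           * bqf (Smat c i) (bsub (bsub (zt t.+1 i) (zt t i))
                                  (bsub (zs t i) (zs t.-1 i)))).
Proof.
move=> _ _ _ _ _ _ _ _ c0 rho0 hZ hW _ hlam hzt t; case: t => [//|t] _.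
change (t.+1.-1) with t.
have [hX1 [hY1 _]] := hZ t.
have hz := (hZ t.+1).2.2 (zs t.+1) hX1 hY1.
have hB1 := (hW t).1.
have hw := (hW t.+1).2 (ws t.+1) hB1.
rewrite /zobj /wobj !big_split /= in hz hw.
have e1 : \sum_(i < N) c / 2 * bqf (Smat c i) (bsub (zs t.+1 i) (zs t.+1 i)) = 0.
  by apply: big1 => i _; rewrite bqf_sub0 mulr0.
have e2 : \sum_(i < N) rho / 2 * bnorm2 (bsub (ws t.+1 i) (ws t.+1 i)) = 0.
  by apply: big1 => i _; rewrite bnorm2_sub0 mulr0.
rewrite e1 e2 !addr0 in hz hw.
have hL2 : Lag d r c (zs t.+2) (ws t.+2) (lam t.+2) =
  \sum_(i < N) Li d r c i (zs t.+2 i) (ws t.+2 i) (lam t.+1 i)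
  + \sum_(i < N) c * bnorm2 (kapp (Amat i) (zs t.+2 i)).
  rewrite /Lag -big_split; apply: eq_bigr => i _; apply: Li_lam => o; exact: hlam.
have hper : forall i : 'I_N, c * bnorm2 (kapp (Amat i) (zs t.+2 i)) <=
       3 * ((Nmax adj)%:R + 2) / c
           * bnorm2 (bsub (kapp (Hmat i) (bsub (zt t.+2 i) (zt t.+1 i)))
                          (kapp (Dmat d r i) (bsub (ws t.+1 i) (ws t i))))
       + 3 * c * (2 * (Nmax adj)%:R + 1)
           * bqf (AtA i) (bsub (bsub (zt t.+2 i) (zt t.+1 i))
                               (bsub (zs t.+2 i) (zs t.+1 i)))
       + 3 * (1 + 2 * c) * (2 + (Nmax adj)%:R)
           * bqf (Smat c i) (bsub (bsub (zt t.+2 i) (zt t.+1 i))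
                                  (bsub (zs t.+1 i) (zs t i))).
  move=> i.
  have hN : ((Ndeg adj i)%:R : R) <= (Nmax adj)%:R.
    by rewrite ler_nat /Nmax (bigD1 i) //= leq_maxl.
  have hid : forall b, kapp (ktr (Amat i)) (fun o => c *: kapp (Amat i) (zs t.+2 i) o) b
     = kapp (ktr (Hmat i)) (bsub (kapp (Dmat d r i) (bsub (ws t.+1 i) (ws t i)))
                                 (kapp (Hmat i) (bsub (zt t.+2 i) (zt t.+1 i)))) b
       + c *: kapp (AtA i) (bsub (bsub (zs t.+2 i) (zs t.+1 i)) (bsub (zt t.+2 i) (zt t.+1 i))) b
       + c *: kapp (Smat c i) (bsub (bsub (zs t.+1 i) (zs t i)) (bsub (zt t.+2 i) (zt t.+1 i))) b.
    move=> b; rewrite kappZ kapp_kmul !kappB !kapp2B.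
    have E1 := hzt t.+1 i b; rewrite kappU in E1.
    have E0 := hzt t i b; rewrite kappU in E0.
    have E2 : kapp (ktr (Amat i)) (lam t.+1 i) b
        = kapp (ktr (Amat i)) (lam t i) b + c *: kapp (AtA i) (zs t.+1 i) b.
      by rewrite (kapp_ext _ _ (hlam t i)) kappD kappZ kapp_kmul.
    exact: lin_id E1 E0 E2.
  have := perI c0 hN (fun o => erefl) hid.
  rewrite (bnorm2_ext (bsubN _ _)) bnorm2N.
  rewrite (@bqf_ext _ _ _ (AtA i) (AtA i) _ (fun b => - bsub (bsub (zt t.+2 i) (zt t.+1 i))
                               (bsub (zs t.+2 i) (zs t.+1 i)) b)) //; last exact: bsubN.
  rewrite (@bqf_ext _ _ _ (Smat c i) (Smat c i) _ (fun b => - bsub (bsub (zt t.+2 i) (zt t.+1 i))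
                               (bsub (zs t.+1 i) (zs t i)) b)) //; last exact: bsubN.
  by rewrite !bqfN.
rewrite hL2 [Lag _ _ _ (zs t.+1) _ _]/Lag.
rewrite !big_split /=.
have hs := @ler_sum _ _ (index_enum 'I_N) xpredT _ _ (fun i _ => hper i).
rewrite !big_split /= in hs.
have n1 : \sum_(i < N) - (c / 2) * bqf (Smat c i) (bsub (zs t.+2 i) (zs t.+1 i))
    = - \sum_(i < N) c / 2 * bqf (Smat c i) (bsub (zs t.+2 i) (zs t.+1 i)).
  by rewrite -sumrN; apply: eq_bigr => i _; rewrite mulNr.
have n2 : \sum_(i < N) - (rho / 2 * bnorm2 (bsub (ws t.+2 i) (ws t.+1 i)))
    = - \sum_(i < N) rho / 2 * bnorm2 (bsub (ws t.+2 i) (ws t.+1 i)).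
  by rewrite -sumrN.
rewrite n1 n2.
lra.
Qed.
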